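(* Let $\beta_{ij}$ ($i\neq j$, $i,j=1,\dots,N$) be smooth functions of $\boldsymbol u=(u_1,\dots,u_N)$ satisfying the Lamé equations $$\frac{\partial\beta_{ij}}{\partial u_k}=\beta_{ik}\beta_{kj}\ (i,j,k \text{ distinct}),\qquad \frac{\partial\beta_{ij}}{\partial u_i}+\frac{\partial\beta_{ji}}{\partial u_j}+\sum_{k\neq i,j}\beta_{ki}\beta_{kj}=0\ (i\neq j).$$ Let $\boldsymbol\xi_i$ ($\mathbb R^M$-valued) and $\boldsymbol\zeta_i$ ($\mathbb R^L$-valued), $i=1,\dots,N$, satisfy $\frac{\partial\boldsymbol\xi_j}{\partial u_i}=\beta_{ji}\boldsymbol\xi_i$ and $\frac{\partial\boldsymbol\zeta_j}{\partial u_i}=\beta_{ji}\boldsymbol\zeta_i$ for $i\neq j$, and set $$\boldsymbol\xi^*_i=\Big(\frac{\partial\boldsymbol\xi_i}{\partial u_i}+\sum_{k\neq i}\boldsymbol\xi_k\beta_{ki}\Big)^{T},\qquad \boldsymbol\zeta^*_i=\Big(\frac{\partial\boldsymbol\zeta_i}{\partial u_i}+\sum_{k\neq i}\boldsymbol\zeta_k\beta_{ki}\Big)^{T}.$$ Let $\Omega(\boldsymbol\xi,\boldsymbol\zeta^* )$ be an $M\times L$ matrix function and $\Omega(\boldsymbol\zeta,\boldsymbol\xi^* )$ an $L\times M$ matrix function with $\frac{\partial\Omega(\boldsymbol\xi,\boldsymbol\zeta^* )}{\partial u_i}=\boldsymbol\xi_i\boldsymbol\zeta^*_i$ and $\frac{\partial\Omega(\boldsymbol\zeta,\boldsymbol\xi^*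 )}{\partial u_i}=\boldsymbol\zeta_i\boldsymbol\xi^*_i$ for all $i$. Then for every $i=1,\dots,N$, $$\frac{\partial}{\partial u_i}\Big(\Omega(\boldsymbol\xi,\boldsymbol\zeta^* )+\Omega(\boldsymbol\zeta,\boldsymbol\xi^* )^{T}-\sum_{k=1}^N\boldsymbol\xi_k\boldsymbol\zeta_k^{T}\Big)=0.$$
   Context: Vectors are columns, starred quantities are row vectors, ${}^T$ is transpose, and products such as $\boldsymbol\xi_i\boldsymbol\zeta^*_i$ denote the outer (column times row) product. All functions are smooth on an open domain of $\mathbb R^N$. *)

(* Defs.v *)
From HB Require Import structures.
From mathcomp Require Import all_boot all_order all_algebra.
From mathcomp Require Import all_classical all_reals all_analysis.
Set Implicit Arguments. Unset Strict Implicit. Unset Printing Implicit Defensive.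
Import Order.TTheory GRing.Theory Num.Theory.
Import numFieldNormedType.Exports.
Local Open Scope classical_set_scope.
Local Open Scope ring_scope.

Definition ev {R : realType} {N : nat} (i : 'I_N) : 'rV[R]_N := delta_mx 0 i.

Definition partial {R : realType} {N : nat} {V : normedModType R}
  (i : 'I_N) (f : 'rV[R]_N -> V) : 'rV[R]_N -> V :=
  fun u => 'D_(ev i) f u.

Fixpoint iter_partial {R : realType} {N : nat} {V : normedModType R}
  (l : seq 'I_N) (f : 'rV[R]_N -> V) : 'rV[R]_N -> V :=
  match l with
  | [::] => f
  | i :: l' => partial i (iter_partial l' f)
  end.

Definition smooth_on {R : realType} {N : nat} {V : normedModType R}
  (D : set 'rV[R]_N) (f : 'rV[R]_N -> V) : Prop :=
  forall (l : seq 'I_N) (u : 'rV[R]_N), D u -> differentiable (iter_partial l f) u.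

Definition starv {R : realType} {N M : nat}
  (beta : 'I_N -> 'I_N -> 'rV[R]_N -> R) (xi : 'I_N -> 'rV[R]_N -> 'cV[R]_M)
  (i : 'I_N) (u : 'rV[R]_N) : 'rV[R]_M :=
  (partial i (xi i) u + \sum_(k < N | k != i) beta k i u *: xi k u)^T.

(* Main.v *)
Require Import Defs.
From HB Require Import structures.
From mathcomp Require Import all_boot all_order all_algebra.
From mathcomp Require Import all_classical all_reals all_analysis.
Import Order.TTheory GRing.Theory Num.Theory.
Import numFieldNormedType.Exports.
Local Open Scope classical_set_scope.
Local Open Scope ring_scope.
Section H.
Context {R : realType} {V : normedModType R}.

Lemma derivable_mulmx m n p (A : V -> 'M[R]_(m,n)) (B : V -> 'M[R]_(n,p)) t v :
  derivable A t v -> derivable B t v -> derivable (fun x => A x *m B x) t v.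
Proof.
move=> /derivable_mxP dA /derivable_mxP dB; apply/derivable_mxP => i j.
have -> : (fun x => (A x *m B x) i j) = \sum_(k < n) (fun x => A x i k * B x k j).
  by apply/funext => x; rewrite mxE fct_sumE.
apply: derivable_sum => k; exact: derivableM.
Qed.

Lemma derive_mulmx m n p (A : V -> 'M[R]_(m,n)) (B : V -> 'M[R]_(n,p)) t v :
  derivable A t v -> derivable B t v ->
  'D_v (fun x => A x *m B x) t = 'D_v A t *m B t + A t *m 'D_v B t.
Proof.
move=> dA dB; rewrite derive_mx; last exact: derivable_mulmx.
move/derivable_mxP: (dA) => dA'; move/derivable_mxP: (dB) => dB'.
rewrite (derive_mx dA) (derive_mx dB).
apply/matrixP => i j; rewrite !mxE.
have -> : (fun x => (A x *m B x) i j) = \sum_(k < n) (fun x => A x i k * B x k j).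
  by apply/funext => x; rewrite mxE fct_sumE.
rewrite derive_sum; last by move=> k; exact: derivableM.
rewrite -big_split /=; apply: eq_bigr => k _.
rewrite deriveM // !mxE addrC; congr (_ + _); rewrite /GRing.scale /= mulrC //.
Qed.

Lemma derivable_trmx m n (A : V -> 'M[R]_(m,n)) t v :
  derivable A t v -> derivable (fun x => (A x)^T) t v.
Proof.
move=> /derivable_mxP dA; apply/derivable_mxP => i j.
have -> : (fun x => (A x)^T i j) = (fun x => A x j i) by apply/funext => x; rewrite mxE.
exact: dA.
Qed.

Lemma derive_trmx m n (A : V -> 'M[R]_(m,n)) t v :
  derivable A t v -> 'D_v (fun x => (A x)^T) t = ('D_v A t)^T.
Proof.
move=> dA; rewrite derive_mx; last exact: derivable_trmx.
rewrite (derive_mx dA); apply/matrixP => i j; rewrite !mxE.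
have -> : (fun x => (A x)^T i j) = (fun x => A x j i) by apply/funext => x; rewrite mxE.
by [].
Qed.
Lemma trZ m n (a : R) (A : 'M[R]_(m,n)) : (a *: A)^T = a *: A^T.
Proof. by apply/matrixP => ? ?; rewrite !mxE. Qed.
End H.

Theorem lemma2 (R : realType) (N M L : nat) (D : set 'rV[R]_N) (hD : open D)
  (beta : 'I_N -> 'I_N -> 'rV[R]_N -> R)
  (xi : 'I_N -> 'rV[R]_N -> 'cV[R]_M) (zeta : 'I_N -> 'rV[R]_N -> 'cV[R]_L)
  (OmXZ : 'rV[R]_N -> 'M[R]_(M, L)) (OmZX : 'rV[R]_N -> 'M[R]_(L, M))
  (sbeta : forall i j, i != j -> smooth_on D (beta i j))
  (sxi : forall i, smooth_on D (xi i)) (szeta : forall i, smooth_on D (zeta i))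
  (sOmXZ : smooth_on D OmXZ) (sOmZX : smooth_on D OmZX)
  (lame1 : forall i j k, i != j -> j != k -> i != k -> forall u, D u ->
     partial k (beta i j) u = beta i k u * beta k j u)
  (lame2 : forall i j, i != j -> forall u, D u ->
     partial i (beta i j) u + partial j (beta j i) u
     + \sum_(k < N | (k != i) && (k != j)) beta k i u * beta k j u = 0)
  (hxi : forall i j, i != j -> forall u, D u ->
     partial i (xi j) u = beta j i u *: xi i u)
  (hzeta : forall i j, i != j -> forall u, D u ->
     partial i (zeta j) u = beta j i u *: zeta i u)
  (hOmXZ : forall i u, D u ->
     partial i OmXZ u = xi i u *m starv beta zeta i u)
  (hOmZX : forall i u, D u ->
     partial i OmZX u = zeta i u *m starv beta xi i u) :
  forall (i : 'I_N) (u : 'rV[R]_N), D u ->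
    partial i (fun v => OmXZ v + (OmZX v)^T
                        - \sum_(k < N) xi k v *m (zeta k v)^T) u = 0.
Proof.
move=> i u Du.
have dd : forall (m n : nat) (f : 'rV[R]_N -> 'M[R]_(m, n)), smooth_on D f -> derivable f u (ev i).
  by move=> m n f sf; apply: diff_derivable; exact: (sf [::] u Du).
have dxi := fun k => dd _ _ _ (sxi k).
have dze := fun k => dd _ _ _ (szeta k).
have -> : (fun v => OmXZ v + (OmZX v)^T - \sum_(k < N) xi k v *m (zeta k v)^T) =
   (OmXZ + (fun v => (OmZX v)^T)) - \sum_(k < N) (fun v => xi k v *m (zeta k v)^T).
  by apply/funext => v; rewrite fct_sumE.
rewrite /partial deriveB; last 2 first.
- by apply: derivableD; [exact: dd|apply: derivable_trmx; exact: dd].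
- by apply: derivable_sum => k; apply: derivable_mulmx => //; apply: derivable_trmx.
rewrite deriveD; [|exact: dd|by apply: derivable_trmx; exact: dd].
rewrite derive_trmx; last exact: dd.
rewrite derive_sum; last by move=> k; apply: derivable_mulmx => //; apply: derivable_trmx.
rewrite (eq_bigr (fun k => 'D_(ev i) (xi k) u *m (zeta k u)^T + xi k u *m ('D_(ev i) (zeta k) u)^T)); last first.
  by move=> k _; rewrite derive_mulmx //; [rewrite derive_trmx|apply: derivable_trmx].
rewrite -[ 'D_(ev i) OmXZ u]/(partial i OmXZ u) hOmXZ //.
rewrite -[ 'D_(ev i) OmZX u]/(partial i OmZX u) hOmZX //.
rewrite (bigD1 i) //=.
rewrite (eq_bigr (fun k => beta k i u *: (xi i u *m (zeta k u)^T) + beta k i u *: (xi k u *m (zeta i u)^T))); last first.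
  move=> k ki.
  rewrite -[ 'D_(ev i) (xi k) u]/(partial i (xi k) u) -[ 'D_(ev i) (zeta k) u]/(partial i (zeta k) u).
  rewrite hxi 1?eq_sym // hzeta 1?eq_sym // -scalemxAl linearZ /= -scalemxAr addrC //.
rewrite /starv trmx_mul trmxK.
rewrite [X in xi i u *m X](raddfD (@trmx _ _ _)) [X in xi i u *m (_ + X)](raddf_sum (@trmx _ _ _)).
rewrite mulmxDr mulmxDl mulmx_sumr mulmx_suml.
rewrite (eq_bigr (fun k => beta k i u *: (xi i u *m (zeta k u)^T))); last first.
  by move=> k _; rewrite scalemxAr; congr (_ *m _); apply/matrixP => ? ?; rewrite !mxE.
rewrite -[ 'D_(ev i) (xi i) u]/(partial i (xi i) u) -[ 'D_(ev i) (zeta i) u]/(partial i (zeta i) u).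
apply/eqP; rewrite subr_eq0 addrACA; apply/eqP.
congr (_ + _); first exact: addrC.
rewrite big_split /=; congr (_ + _); apply: eq_bigr => k _; by rewrite scalemxAl.
Qed.
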